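(* Let $A$ be a commutative ring. There is a well-defined group homomorphism $\alpha:\mathrm{St}(2,A)\to C(A)$ with $\alpha(x_{21}(a))=y(a)$ and $\alpha(x_{12}(a))=\bar y(a)$ for all $a\in A$. Furthermore $\psi\circ\alpha=\phi$.
   Context: $C(A)$ is the group with generators $\epsilon(a)$, $a\in A$, and relations: with $h(u):=\epsilon(-u)\epsilon(-u^{-1})\epsilon(-u)$, (1) $h(u)h(v)=h(uv)$ ($u,v\in A^\times$); (2) $\epsilon(a)\epsilon(0)\epsilon(b)=h(-1)\epsilon(a+b)$; (3) $h(u)\epsilon(a)h(u)=\epsilon(u^2a)$. $y(a):=\epsilon(0)^3\epsilon(a)$ and $\bar y(a):=\epsilon(-a)\epsilon(0)^3$. $\psi:C(A)\to\mathrm{SL}_2(A)$ sends $\epsilon(a)\mapsto\begin{pmatrix}a&1\\-1&0\end{pmatrix}$. $\mathrm{St}(2,A)$ is the group generated by $x_{12}(t),x_{21}(t)$, $t\in A$, with relations $x_{ij}(s)x_{ij}(t)=x_{ij}(s+t)$ and $w_{ij}(u)x_{ij}(t)w_{ij}(-u)=x_{ji}(-u^{-2}t)$ for $u\in A^\times$, where $w_{ij}(u)=x_{ij}(u)x_{ji}(-u^{-1})x_{ij}(u)$. $\phi:\mathrm{St}(2,A)\to\mathrm{SL}_2(A)$ sends $x_{12}(t)\mapsto\begin{pmatrix}1&t\\0&1\end{pmatrix}$ and $x_{21}(t)\mapsto\begin{pmatrix}1&0\\t&1\end{pmatrix}$. *)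

(* Defs.v *)
(* Groups given by presentations are modelled as setoids:
   words in the generators and their formal inverses, modulo the congruence
   generated by free cancellation and the defining relations. *)
From mathcomp Require Import all_boot all_algebra.
Set Implicit Arguments. Unset Strict Implicit. Unset Printing Implicit Defensive.
Import GRing.Theory.
Local Open Scope ring_scope.

(* a letter (b, x): x if b = false, x^{-1} if b = true *)
Definition letter (X : Type) := (bool * X)%type.
Definition word (X : Type) := seq (letter X).
Definition flip (X : Type) (l : letter X) : letter X := (~~ l.1, l.2).
Definition gen (X : Type) (x : X) : word X := [:: (false, x)].

Inductive pres_eq (X : Type) (R : word X -> word X -> Prop) : word X -> word X -> Prop :=
| pe_refl w : pres_eq R w w
| pe_sym w1 w2 : pres_eq R w1 w2 -> pres_eq R w2 w1
| pe_trans w1 w2 w3 : pres_eq R w1 w2 -> pres_eq R w2 w3 -> pres_eq R w1 w3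
| pe_cancel u v l : pres_eq R (u ++ l :: flip l :: v) (u ++ v)
| pe_rel u v l r : R l r -> pres_eq R (u ++ l ++ v) (u ++ r ++ v).

(* f : words -> words induces a well-defined group homomorphism <X|RX> -> <Y|RY> *)
Definition is_pres_hom (X Y : Type) (RX : word X -> word X -> Prop)
  (RY : word Y -> word Y -> Prop) (f : word X -> word Y) : Prop :=
  (forall w1 w2, pres_eq RX w1 w2 -> pres_eq RY (f w1) (f w2)) /\
  (forall w1 w2, pres_eq RY (f (w1 ++ w2)) (f w1 ++ f w2)).

Definition mx_eval (A : comUnitRingType) (X : Type) (g : X -> 'M[A]_2) (w : word X)
  : 'M[A]_2 :=
  foldr (fun l acc => (if l.1 then (g l.2)^-1 else g l.2) * acc) 1 w.

Definition mx2 (A : comUnitRingType) (a b c d : A) : 'M[A]_2 :=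
  \matrix_(i < 2, j < 2)
    if val i == 0%N then (if val j == 0%N then a else b)
    else (if val j == 0%N then c else d).

Section CA.
Variable A : comUnitRingType.

Definition hw (u : A) : word A := gen (- u) ++ gen (- u^-1) ++ gen (- u).

Inductive C_rel : word A -> word A -> Prop :=
| C_rel1 u v : u \is a GRing.unit -> v \is a GRing.unit ->
    C_rel (hw u ++ hw v) (hw (u * v))
| C_rel2 a b : C_rel (gen a ++ gen 0 ++ gen b) (hw (-1) ++ gen (a + b))
| C_rel3 u a : u \is a GRing.unit ->
    C_rel (hw u ++ gen a ++ hw u) (gen (u ^+ 2 * a)).

Definition y (a : A) : word A := gen 0 ++ gen 0 ++ gen 0 ++ gen a.
Definition ybar (a : A) : word A := gen (- a) ++ gen 0 ++ gen 0 ++ gen 0.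

Definition psi_gen (a : A) : 'M[A]_2 := mx2 a 1 (-1) 0.

Inductive stgen : Type := x12 of A | x21 of A.

Definition w12 (u : A) : word stgen :=
  gen (x12 u) ++ gen (x21 (- u^-1)) ++ gen (x12 u).
Definition w21 (u : A) : word stgen :=
  gen (x21 u) ++ gen (x12 (- u^-1)) ++ gen (x21 u).

Inductive St_rel : word stgen -> word stgen -> Prop :=
| St_add12 s t : St_rel (gen (x12 s) ++ gen (x12 t)) (gen (x12 (s + t)))
| St_add21 s t : St_rel (gen (x21 s) ++ gen (x21 t)) (gen (x21 (s + t)))
| St_w12 u t : u \is a GRing.unit ->
    St_rel (w12 u ++ gen (x12 t) ++ w12 (- u)) (gen (x21 (- (u^-1) ^+ 2 * t)))
| St_w21 u t : u \is a GRing.unit ->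
    St_rel (w21 u ++ gen (x21 t) ++ w21 (- u)) (gen (x12 (- (u^-1) ^+ 2 * t))).

Definition phi_gen (g : stgen) : 'M[A]_2 :=
  match g with
  | x12 t => mx2 1 t 0 1
  | x21 t => mx2 1 0 t 1
  end.

End CA.

(* Main.v *)
Require Import Defs.
From mathcomp Require Import all_boot all_algebra ring.
From Stdlib Require Import Setoid Morphisms RelationClasses.
Set Implicit Arguments. Unset Strict Implicit. Unset Printing Implicit Defensive.
Import GRing.Theory.
Local Open Scope ring_scope.


Section Gen.
Variables (X : Type) (R : word X -> word X -> Prop).
Local Notation peq := (pres_eq R).

Global Instance peq_equiv : Equivalence peq.
Proof. split; [exact: pe_refl | exact: pe_sym | exact: pe_trans]. Qed.

Lemma peq_ctx u v w1 w2 : peq w1 w2 -> peq (u ++ w1 ++ v) (u ++ w2 ++ v).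
Proof.
elim=> {w1 w2} [w|w1 w2 _ IH|w1 w2 w3 _ IH1 _ IH2|u' v' l|u' v' l r H].
- exact: pe_refl.
- exact: pe_sym.
- exact: pe_trans IH2.
- move: (pe_cancel R (u ++ u') (v' ++ v) l). rewrite -!catA. by move=> h; exact h.
- move: (pe_rel (u ++ u') (v' ++ v) H). rewrite -!catA. by move=> h; exact h.
Qed.

Global Instance cat_peq : Proper (peq ==> peq ==> peq) (@cat (letter X)).
Proof.
move=> w1 w2 H v1 v2 H'. transitivity (w2 ++ v1).
  by have := peq_ctx [::] v1 H.
by have := peq_ctx w2 [::] H'; rewrite !cats0.
Qed.

Definition winv (w : word X) : word X := rev (map (@flip X) w).

Lemma flipK (l : letter X) : flip (flip l) = l.
Proof. by case: l => b x; rewrite /flip /= negbK. Qed.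

Lemma inv_cons l w : winv (l :: w) = winv w ++ [:: flip l].
Proof. by rewrite /winv /= rev_cons cats1. Qed.

Lemma catinv w : peq (w ++ winv w) [::].
Proof.
elim: w => [|l w IH]; first exact: pe_refl. rewrite inv_cons.
change (peq ([:: l] ++ (w ++ winv w ++ [:: flip l])) [::]).
rewrite (catA w) IH /=. exact: (pe_cancel R [::] [::] l).
Qed.

Lemma invcat w : peq (winv w ++ w) [::].
Proof.
elim: w => [|l w IH]; first exact: pe_refl. rewrite inv_cons -catA /=.
have := pe_cancel R (winv w) w (flip l). rewrite flipK => ->. exact: IH.
Qed.

Lemma cancel_l a b b' : peq (a ++ b) (a ++ b') -> peq b b'.
Proof.
move=> H. transitivity ((winv a ++ a) ++ b); first by rewrite invcat; exact: pe_refl.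
rewrite -catA H catA invcat; exact: pe_refl.
Qed.
End Gen.

Section C.
Variable A : comUnitRingType.
Local Notation ceq := (pres_eq (@C_rel A)).
Local Notation z := (gen (0:A)).
Local Notation c := (hw (-1 : A)).

Lemma lift l r : ceq l r -> forall w, ceq (l ++ w) (r ++ w).
Proof. by move=> H w; rewrite H; exact: pe_refl. Qed.

Lemma rel (l r : word A) : C_rel l r -> ceq l r.
Proof. by move=> H; have := pe_rel [::] [::] H; rewrite !cats0. Qed.

Lemma hw1 : ceq (hw 1) [::].
Proof.
have := rel (C_rel1 (@unitr1 A) (@unitr1 A)); rewrite mulr1 => H.
apply: (@cancel_l _ _ (hw 1)). by rewrite cats0.
Qed.

Lemma cc w : ceq (c ++ c ++ w) w.
Proof.
have := rel (C_rel1 (@unitrN1 A) (@unitrN1 A)); rewrite mulrNN mulr1 hw1 => H.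
by rewrite catA H; exact: pe_refl.
Qed.

Lemma cE a w : ceq (c ++ gen a ++ w) (gen a ++ c ++ w).
Proof.
have := rel (C_rel3 a (@unitrN1 A)); rewrite sqrrN expr1n mul1r => H.
transitivity (c ++ gen a ++ c ++ c ++ w); first by rewrite cc; exact: pe_refl.
by rewrite (catA (gen a)) catA H; exact: pe_refl.
Qed.

Lemma ch u w : ceq (c ++ hw u ++ w) (hw u ++ c ++ w).
Proof.
have -> : hw u = gen (-u) ++ gen (-u^-1) ++ gen (-u) by [].
by rewrite -(catA (gen (-u))) -(catA (gen (-u^-1))) !cE; exact: pe_refl. Qed.

Lemma zinv w : ceq (z ++ winv z ++ w) w.
Proof. by rewrite catA catinv; exact: pe_refl. Qed.

Lemma zz w : ceq (z ++ z ++ w) (c ++ w).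
Proof.
have := rel (C_rel2 0 0); rewrite addr0 => H.
transitivity (z ++ z ++ z ++ winv z ++ w); first by rewrite zinv; exact: pe_refl.
rewrite (catA z z (winv z ++ w)) (catA z (z ++ z)) H -catA zinv; exact: pe_refl.
Qed.

Lemma rel2 a b w : ceq (gen a ++ z ++ gen b ++ w) (c ++ gen (a + b) ++ w).
Proof. by rewrite (catA z (gen b) w) (catA (gen a)) (rel (C_rel2 a b)) -catA; exact: pe_refl. Qed.

Lemma rel3 u a w : u \is a GRing.unit ->
  ceq (hw u ++ gen a ++ hw u ++ w) (gen (u ^+ 2 * a) ++ w).
Proof. by move=> U; rewrite (catA (gen a) (hw u) w) (catA (hw u) (gen a ++ hw u)) (rel (C_rel3 a U)); exact: pe_refl. Qed.

Lemma hzh u w : u \is a GRing.unit -> ceq (hw u ++ z ++ hw u ++ w) (z ++ w).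
Proof. by move=> U; rewrite rel3 // mulr0; exact: pe_refl. Qed.

Lemma hinv u w : u \is a GRing.unit -> ceq (hw u ++ hw u^-1 ++ w) w.
Proof.
move=> U; have Uv : u^-1 \is a GRing.unit by rewrite unitrV.
have := rel (C_rel1 U Uv); rewrite mulrV // hw1 => H.
by rewrite catA H; exact: pe_refl.
Qed.

Lemma hinv' u w : u \is a GRing.unit -> ceq (hw u^-1 ++ hw u ++ w) w.
Proof. move=> U; have Uv : u^-1 \is a GRing.unit by rewrite unitrV.
have := hinv w Uv; rewrite invrK => h; exact: h. Qed.

Lemma hneg u w : u \is a GRing.unit -> ceq (hw (- u) ++ w) (c ++ hw u ++ w).
Proof.
move=> U; have := rel (C_rel1 (@unitrN1 A) U); rewrite mulN1r => H.
by rewrite catA H; exact: pe_refl.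
Qed.

Lemma zh u w : u \is a GRing.unit -> ceq (z ++ hw u ++ w) (hw u^-1 ++ z ++ w).
Proof.
move=> U. transitivity (hw u^-1 ++ hw u ++ z ++ hw u ++ w).
  by symmetry; apply: hinv'.
by rewrite hzh //; exact: pe_refl.
Qed.

Lemma hz u w : u \is a GRing.unit -> ceq (hw u ++ z ++ w) (z ++ hw u^-1 ++ w).
Proof.
move=> U. transitivity (hw u ++ z ++ hw u ++ hw u^-1 ++ w).
  by rewrite hinv //; exact: pe_refl.
by rewrite hzh //; exact: pe_refl.
Qed.

End C.

Section W.
Variable A : comUnitRingType.
Local Notation ceq := (pres_eq (@C_rel A)).
Local Notation z := (gen (0:A)).
Local Notation c := (hw (-1 : A)).

Lemma hwE (u : A) W : gen (-u) ++ gen (-u^-1) ++ gen (-u) ++ W = hw u ++ W.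
Proof. by rewrite /hw -!catA. Qed.

Lemma W12 u w : u \is a GRing.unit ->
  ceq (gen (-u) ++ z ++ z ++ z ++ z ++ z ++ z ++ gen (-u^-1) ++ gen (-u) ++ z ++ z ++ z ++ w)
      (hw u ++ z ++ w).
Proof.
move=> U. rewrite zz zz zz cc -cE hwE zz -ch cc. exact: pe_refl.
Qed.

Lemma hwNE (u : A) W : gen u ++ gen u^-1 ++ gen u ++ W = hw (-u) ++ W.
Proof. by rewrite /hw invrN !opprK -!catA. Qed.

Lemma W21 u w : u \is a GRing.unit ->
  ceq (gen u ++ gen (- - u^-1) ++ z ++ z ++ z ++ z ++ z ++ z ++ gen u ++ w)
      (hw u ++ w).
Proof.
move=> U. rewrite zz zz zz cc -cE -cE opprK hwNE. rewrite (hneg w U) cc. exact: pe_refl.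
Qed.

Lemma R3 u t w : u \is a GRing.unit ->
  ceq (gen (-u) ++ z ++ z ++ z ++ z ++ z ++ z ++ gen (-u^-1) ++ gen (-u) ++ z ++ z ++ z ++
       gen (-t) ++ z ++ z ++ z ++
       gen (- - u) ++ z ++ z ++ z ++ z ++ z ++ z ++ gen (- (-u)^-1) ++ gen (- -u) ++ z ++ z ++ z ++ w)
      (z ++ z ++ z ++ gen (- (u^-1)^+2 * t) ++ w).
Proof.
move=> U. have UN : -u \is a GRing.unit by rewrite unitrN.
have Uv : u^-1 \is a GRing.unit by rewrite unitrV.
rewrite (W12 _ U) (W12 _ UN) (hneg _ U) zz cE cc (zh _ U) zz (hz _ U) (rel3 _ _ Uv) -cE zz -cE mulrN mulNr. exact: pe_refl.
Qed.

Lemma R4 u t w : u \is a GRing.unit ->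
  ceq (z ++ z ++ z ++ gen u ++ gen (- - u^-1) ++ z ++ z ++ z ++ z ++ z ++ z ++ gen u ++
       z ++ z ++ z ++ gen t ++
       z ++ z ++ z ++ gen (-u) ++ gen (- - (-u)^-1) ++ z ++ z ++ z ++ z ++ z ++ z ++ gen (-u) ++ w)
      (gen (- (- (u^-1)^+2 * t)) ++ z ++ z ++ z ++ w).
Proof.
move=> U. have UN : -u \is a GRing.unit by rewrite unitrN.
have Uv : u^-1 \is a GRing.unit by rewrite unitrV.
rewrite (W21 _ U) (W21 _ UN) (hneg _ U) zz (zh _ U) zz zz cc zz cE cc (zh _ U) (rel3 _ _ Uv) cE zz mulNr opprK. exact: pe_refl.
Qed.
End W.

Section M.
Variable A : comUnitRingType.

Lemma mx2_mul (a b c d a' b' c' d' : A) :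
  mx2 a b c d * mx2 a' b' c' d' =
  mx2 (a*a'+b*c') (a*b'+b*d') (c*a'+d*c') (c*b'+d*d').
Proof.
rewrite -mulmxE; apply/matrixP => i j; rewrite !mxE !big_ord_recr big_ord0 /= !mxE /=.
by case: i => [[|[|i]]] Hi; case: j => [[|[|j]]] Hj //=; rewrite add0r.
Qed.

Lemma mx2_1 : (1 : 'M[A]_2) = mx2 1 0 0 1.
Proof.
apply/matrixP => i j; rewrite !mxE /=.
by case: i => [[|[|i]]] Hi; case: j => [[|[|j]]] Hj.
Qed.

Lemma mx2_eq (a b c d a' b' c' d' : A) :
  a = a' -> b = b' -> c = c' -> d = d' -> mx2 a b c d = mx2 a' b' c' d'.
Proof. by move=> -> -> -> ->. Qed.

Lemma psi_unit (a : A) : psi_gen a \is a GRing.unit.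
Proof.
apply/unitrP; exists (mx2 0 (-1) 1 a); rewrite /psi_gen !mx2_mul mx2_1.
split; apply: mx2_eq; ring.
Qed.

Lemma psi_y (a : A) : mx_eval (@psi_gen A) (y a) = mx2 1 0 a 1.
Proof.
rewrite /y /mx_eval /= mulr1 /psi_gen !mx2_mul; apply: mx2_eq; ring.
Qed.

Lemma psi_ybar (a : A) : mx_eval (@psi_gen A) (ybar a) = mx2 1 a 0 1.
Proof.
rewrite /ybar /mx_eval /= mulr1 /psi_gen !mx2_mul; apply: mx2_eq; ring.
Qed.
End M.

Section Main.
Variable A : comUnitRingType.
Local Notation ceq := (pres_eq (@C_rel A)).
Local Notation z := (gen (0:A)).
Local Notation c := (hw (-1 : A)).

Definition fA (g : stgen A) : word A := match g with x12 a => ybar a | x21 a => y a end.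
Definition fl (l : letter (stgen A)) : word A := if l.1 then winv (fA l.2) else fA l.2.
Definition alpha (w : word (stgen A)) : word A := flatten (map fl w).

Lemma alpha_cat u v : alpha (u ++ v) = alpha u ++ alpha v.
Proof. by rewrite /alpha map_cat flatten_cat. Qed.

Lemma alpha12 a : alpha (gen (x12 a)) = ybar a.
Proof. exact: (cats0 (ybar a)). Qed.
Lemma alpha21 a : alpha (gen (x21 a)) = y a.
Proof. exact: (cats0 (y a)). Qed.

Lemma R1 s t w : ceq (ybar s ++ ybar t ++ w) (ybar (s + t) ++ w).
Proof.
rewrite /ybar -!catA zz -cE rel2 cc opprD. exact: pe_refl.
Qed.

Lemma R2a s t w : ceq (gen s ++ z ++ z ++ z ++ gen t ++ w) (gen (s + t) ++ w).
Proof. rewrite zz -cE rel2 cc. exact: pe_refl. Qed.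

Lemma R2 s t w : ceq (y s ++ y t ++ w) (y (s + t) ++ w).
Proof. rewrite /y -!catA R2a. exact: pe_refl. Qed.

Lemma alpha_rel l r : St_rel l r -> ceq (alpha l) (alpha r).
Proof.
case=> [s t|s t|u t U|u t U].
- have := R1 s t [::]; rewrite !alpha_cat !alpha12 !cats0 => h; exact: h.
- have := R2 s t [::]; rewrite !alpha_cat !alpha21 !cats0 => h; exact: h.
- rewrite -[alpha (gen _)]cats0 -[alpha (_ ++ _)]cats0.
  rewrite /w12 !alpha_cat !alpha12 !alpha21 /ybar /y -!catA.
  exact: R3.
- rewrite -[alpha (gen _)]cats0 -[alpha (_ ++ _)]cats0.
  rewrite /w21 !alpha_cat !alpha12 !alpha21 /ybar /y -!catA.
  exact: R4.
Qed.

Lemma alpha_hom w1 w2 : pres_eq (@St_rel A) w1 w2 -> ceq (alpha w1) (alpha w2).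
Proof.
elim=> {w1 w2} [w|w1 w2 _ IH|w1 w2 w3 _ IH1 _ IH2|u v l|u v l r H].
- exact: pe_refl.
- exact: pe_sym.
- exact: pe_trans IH2.
- rewrite !alpha_cat. case: l => [[] g].
  + change (ceq (alpha u ++ (winv (fA g) ++ fA g ++ alpha v)) (alpha u ++ alpha v)).
    rewrite (catA (winv (fA g))) invcat. exact: pe_refl.
  + change (ceq (alpha u ++ (fA g ++ winv (fA g) ++ alpha v)) (alpha u ++ alpha v)).
    rewrite (catA (fA g)) catinv. exact: pe_refl.
- rewrite !alpha_cat (alpha_rel H). exact: pe_refl.
Qed.

Lemma mx_eval_cat (X : Type) (g : X -> 'M[A]_2) u v :
  mx_eval g (u ++ v) = mx_eval g u * mx_eval g v.
Proof. by elim: u => [|l u IH] /=; rewrite ?mul1r // IH mulrA. Qed.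

Lemma mx_eval_unit (X : Type) (g : X -> 'M[A]_2) w :
  (forall x, g x \is a GRing.unit) -> mx_eval g w \is a GRing.unit.
Proof.
move=> Hg; elim: w => [|l w IH] /=; first exact: unitr1.
rewrite unitrMr //; case: ifP => _; rewrite ?unitrV; exact: Hg.
Qed.

Lemma mx_eval_inv (X : Type) (g : X -> 'M[A]_2) w :
  (forall x, g x \is a GRing.unit) -> mx_eval g (winv w) = (mx_eval g w)^-1.
Proof.
move=> Hg; elim: w => [|l w IH]; first by rewrite /= invr1.
rewrite inv_cons mx_eval_cat IH /= mulr1.
have Hl : (if l.1 then (g l.2)^-1 else g l.2) \is a GRing.unit.
  by case: ifP => _; rewrite ?unitrV; exact: Hg.
rewrite invrM // ?(mx_eval_unit w Hg) //.
by case: l Hl => [[] x] Hl /=; rewrite ?invrK.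
Qed.

Lemma psi_f g : mx_eval (@psi_gen A) (fA g) = phi_gen g.
Proof. by case: g => a; [exact: psi_ybar | exact: psi_y]. Qed.

Lemma psi_alpha w : mx_eval (@psi_gen A) (alpha w) = mx_eval (@phi_gen A) w.
Proof.
elim: w => [|l w IH] //=.
rewrite -IH. have -> : alpha (l :: w) = fl l ++ alpha w by [].
rewrite mx_eval_cat; congr (_ * _).
case: l => [[] g]; rewrite /fl /= ?mx_eval_inv ?psi_f //; exact: psi_unit.
Qed.
End Main.

Theorem propositionA10 (A : comUnitRingType) :
  exists alpha : word (stgen A) -> word A,
    is_pres_hom (@St_rel A) (@C_rel A) alpha /\
    (forall a : A, pres_eq (@C_rel A) (alpha (gen (x21 a))) (y a)) /\
    (forall a : A, pres_eq (@C_rel A) (alpha (gen (x12 a))) (ybar a)) /\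
    (forall w : word (stgen A),
        mx_eval (@psi_gen A) (alpha w) = mx_eval (@phi_gen A) w).
Proof.
exists (@alpha A); split; [split|split; [|split]].
- exact: alpha_hom.
- by move=> w1 w2; rewrite alpha_cat; exact: pe_refl.
- by move=> a; rewrite alpha21; exact: pe_refl.
- by move=> a; rewrite alpha12; exact: pe_refl.
- exact: psi_alpha.
Qed.
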